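(* Let $K$ be a positive definite field and $E$ the graph with one vertex and two loops $a,b$. Then $L_K(E)$ is graded $*$-regular but is neither graded unit-regular nor graded directly finite.
   Context: $L_K(E)$ is the unital $K$-algebra generated by $a,b,a^*,b^*$ with identity $v$ (the vertex) subject to $a^*a=b^*b=1$, $a^*b=b^*a=0$, $aa^*+bb^*=1$; it is $\mathbb Z$-graded with $\deg a=\deg b=1$, $\deg a^*=\deg b^*=-1$, and has the involution $(\sum k_ipq^* )^*=\sum k_i^*qp^*$ induced from the involution of $K$. $K$ positive definite: $\sum k_ik_i^*=0\Rightarrow$ all $k_i=0$. A unital graded $*$-ring is graded $*$-regular if for every homogeneous $x$ there is a homogeneous projection $p$ ($p=p^2=p^*$) with $xA=pA$. Graded unit-regular: for every homogeneous $x$ there is an invertible homogeneous $y$ with $xyx=x$. Graded directly finite: for homogeneous $x,y$, $xy=1$ implies $yx=1$. *)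

(* Defs.v *)
From HB Require Import structures.
From mathcomp Require Import all_boot all_order all_algebra.
Set Implicit Arguments. Unset Strict Implicit. Unset Printing Implicit Defensive.
Import Order.TTheory GRing.Theory Num.Theory.
Local Open Scope ring_scope.

(* The Leavitt path algebra L_K(E) of the graph E with one vertex v and two
   loops a, b, given concretely by its defining presentation:
   free unital K-algebra on a, b, a*, b* modulo the two-sided ideal generated
   by the relations a*a = 1, b*b = 1, a*b = 0, b*a = 0, aa* + bb* = 1
   (the vertex v is the identity). *)

Inductive letter := La | Lb | Las | Lbs.

Definition letter_eqb (x y : letter) : bool :=
  match x, y with
  | La, La | Lb, Lb | Las, Las | Lbs, Lbs => true
  | _, _ => false end.

Lemma letter_eqP : Equality.axiom letter_eqb.
Proof. by case; case; constructor. Qed.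

HB.instance Definition _ := hasDecEq.Build letter letter_eqP.

Definition word := seq letter.

Definition ldeg (l : letter) : int :=
  match l with La | Lb => 1 | Las | Lbs => -1 end.
Definition wdeg (w : word) : int := \sum_(l <- w) ldeg l.

Definition lstar (l : letter) : letter :=
  match l with La => Las | Lb => Lbs | Las => La | Lbs => Lb end.
Definition wstar (w : word) : word := rev (map lstar w).

Section Free.
Variable K : fieldType.

(* Elements of the free algebra K<a,b,a*,b*> as formal finite K-linear
   combinations of words; [coeff f w] is the coefficient of the word w. *)
Definition free := seq (K * word).

Definition coeff (f : free) (w : word) : K := \sum_(t <- f | t.2 == w) t.1.

Definition fadd (f g : free) : free := f ++ g.
Definition fscale (k : K) (f : free) : free := [seq (k * t.1, t.2) | t <- f].
Definition fneg (f : free) : free := fscale (-1) f.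
Definition fmul (f g : free) : free :=
  [seq (t.1 * s.1, t.2 ++ s.2) | t <- f, s <- g].
Definition fone : free := [:: (1, [::])].
Definition fword (w : word) : free := [:: (1, w)].
Definition fstar (conj : K -> K) (f : free) : free :=
  [seq (conj t.1, wstar t.2) | t <- f].

Definition rel (i : nat) : free :=
  match i with
  | 0 => fadd (fword [:: Las; La]) (fneg fone)
  | 1 => fadd (fword [:: Lbs; Lb]) (fneg fone)
  | 2 => fword [:: Las; Lb]
  | 3 => fword [:: Lbs; La]
  | _ => fadd (fadd (fword [:: La; Las]) (fword [:: Lb; Lbs])) (fneg fone)
  end.

Definition idealgen (s : seq (K * word * nat * word)) : free :=
  flatten [seq fscale t.1.1.1
             (fmul (fword t.1.1.2) (fmul (rel t.1.2) (fword t.2))) | t <- s].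

Definition inIdeal (f : free) : Prop :=
  exists s, forall w, coeff f w = coeff (idealgen s) w.

Definition eqL (f g : free) : Prop := inIdeal (fadd f (fneg g)).

Definition homog (f : free) : Prop :=
  exists (n : int) (g : free), eqL f g /\ all (fun t => wdeg t.2 == n) g.

Definition projL (conj : K -> K) (p : free) : Prop :=
  eqL (fmul p p) p /\ eqL (fstar conj p) p.

Definition invertibleL (y : free) : Prop :=
  exists z, eqL (fmul y z) fone /\ eqL (fmul z y) fone.

Definition graded_star_regular (conj : K -> K) : Prop :=
  forall x, homog x -> exists p, homog p /\ projL conj p /\
    (forall y, exists z, eqL (fmul x y) (fmul p z)) /\
    (forall y, exists z, eqL (fmul p y) (fmul x z)).

Definition graded_unit_regular : Prop :=
  forall x, homog x -> exists y, homog y /\ invertibleL y /\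
    eqL (fmul (fmul x y) x) x.

Definition graded_directly_finite : Prop :=
  forall x y, homog x -> homog y -> eqL (fmul x y) fone -> eqL (fmul y x) fone.

End Free.

Definition positive_definite (K : fieldType) (conj : K -> K) : Prop :=
  forall s : seq K, \sum_(k <- s) k * conj k = 0 -> all (fun k => k == 0) s.

(* Main.v *)
Require Import Defs.
From HB Require Import structures.
From mathcomp Require Import all_boot all_order all_algebra.
From mathcomp Require Import zify ring.
From Stdlib Require Import FunctionalExtensionality.
Import Defs.
Set Implicit Arguments. Unset Strict Implicit. Unset Printing Implicit Defensive.
Import Order.TTheory GRing.Theory Num.Theory.
Local Open Scope ring_scope.


Section Mat.
Variable K : fieldType.
Variable conj : {rmorphism K -> K}.
Hypothesis ci : involutive conj.
Hypothesis pd : positive_definite conj.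

Definition st m n (A : 'M[K]_(m,n)) : 'M_(n,m) := map_mx conj A^T.

Lemma stM m n p (A : 'M[K]_(m,n)) (B : 'M_(n,p)) : st (A *m B) = st B *m st A.
Proof. by rewrite /st trmx_mul map_mxM. Qed.

Lemma stK m n (A : 'M[K]_(m,n)) : st (st A) = A.
Proof. by apply/matrixP=> i j; rewrite !mxE ci. Qed.

Lemma st_inv n (A : 'M[K]_n) : st (invmx A) = invmx (st A).
Proof. by rewrite /st trmx_inv map_invmx. Qed.

Lemma pd_row m (w : 'rV[K]_m) : w *m st w = 0 -> w = 0.
Proof.
move=> H.
have : (w *m st w) 0 0 = 0 by rewrite H mxE.
rewrite mxE => Hs.
have Hs' : \sum_(k <- [seq w 0 j | j <- enum 'I_m]) k * conj k = 0.
  rewrite big_map big_enum /= -[X in _ = X]Hs; apply: eq_big => [j|j _]; [by []|by rewrite !mxE].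
move/pd: Hs' => /allP Hall.
apply/matrixP=> i j; rewrite ord1 mxE; apply/eqP; apply: Hall.
by apply: map_f; rewrite mem_enum.
Qed.

Lemma proj_exists m n (X : 'M[K]_(m,n)) :
  exists P : 'M_m, exists Z : 'M_(n,m),
    P *m P = P /\ st P = P /\ P = X *m Z /\ X = P *m X.
Proof.
have := eq_row_base X^T; have := row_base_free X^T.
move: (row_base X^T) => B freeB eqB.
set G := B *m st B.
have Gu : G \in unitmx.
  rewrite -row_free_unit -kermx_eq0; apply/eqP/row_matrixP => i.
  rewrite row0.
  have /sub_kermxP Hk : (row i (kermx G) <= kermx G)%MS by apply: row_sub.
  set v := row i (kermx G) in Hk *.
  have : (v *m B) *m st (v *m B) = 0.
    by rewrite stM mulmxA -(mulmxA v) -/G Hk mul0mx.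
  move/pd_row => /eqP; rewrite mulmx_free_eq0 //; by move/eqP.
set Q := st B *m invmx G *m B.
have stG : st G = G by rewrite /G stM stK.
have BQ : B *m Q = B by rewrite /Q !mulmxA -/G mulmxV // mul1mx.
have QQ : Q *m Q = Q.
  by rewrite {1}/Q -mulmxA BQ.
have stQ : st Q = Q by rewrite /Q !stM !stK st_inv stG mulmxA.
have XB : (X^T <= B)%MS by rewrite eqB.
have QB : (Q <= X^T)%MS by rewrite -eqB submxMl.
case/submxP: XB => D HD.
case/submxP: QB => W HW.
exists Q^T, W^T; split; [|split; [|split]].
- by rewrite -trmx_mul QQ.
- by apply/matrixP => i j; move/matrixP: stQ => /(_ j i); rewrite !mxE => ->.
- by rewrite HW trmx_mul trmxK.
- apply: trmx_inj; rewrite trmx_mul trmxK HD -mulmxA BQ //.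
Qed.
End Mat.


Lemma catE (u v w : word) :
  (u ++ v == w) = (take (size u) w == u) && (drop (size u) w == v).
Proof.
apply/eqP/andP => [<-|[/eqP H1 /eqP H2]].
  by rewrite take_size_cat // drop_size_cat.
by rewrite -H1 -H2 cat_take_drop.
Qed.

Lemma catEr (u v w : word) :
  (v ++ u == w) = (drop (size w - size u)%N w == u) && (take (size w - size u)%N w == v).
Proof.
apply/eqP/andP => [<-|[/eqP H1 /eqP H2]].
  by rewrite size_cat addnK take_size_cat // drop_size_cat.
by rewrite -H1 -H2 cat_take_drop.
Qed.

Section Core.
Variable K : fieldType.
Implicit Types f g h : free K.

Lemma natr_and (a b : bool) : (a && b)%:R = a%:R * b%:R :> K.
Proof. by case: a; case: b; rewrite ?mulr1 ?mulr0. Qed.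

Lemma coeffE f w : coeff f w = \sum_(t <- f) t.1 * (t.2 == w)%:R.
Proof.
rewrite /coeff big_mkcond; apply: eq_bigr => t _.
by case: eqP => _; rewrite ?mulr1 ?mulr0.
Qed.

Lemma coeff_nil w : coeff ([::] : free K) w = 0.
Proof. by rewrite /coeff big_nil. Qed.

Lemma coeff_cons t f w : coeff (t :: f) w = t.1 * (t.2 == w)%:R + coeff f w.
Proof. by rewrite !coeffE big_cons. Qed.

Lemma coeff_cat f g w : coeff (f ++ g) w = coeff f w + coeff g w.
Proof. by rewrite /coeff big_cat. Qed.

Lemma coeff_scale k f w : coeff (fscale k f) w = k * coeff f w.
Proof. by rewrite /coeff /fscale big_map mulr_sumr. Qed.

Lemma coeff_neg f w : coeff (fneg f) w = - coeff f w.
Proof. by rewrite coeff_scale mulN1r. Qed.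

Lemma coeff_flatten (L : seq (free K)) w :
  coeff (flatten L) w = \sum_(l <- L) coeff l w.
Proof. by rewrite /coeff big_flatten. Qed.

Lemma coeff_mul f g w :
  coeff (fmul f g) w = \sum_(t <- f) \sum_(s <- g) t.1 * s.1 * (t.2 ++ s.2 == w)%:R.
Proof. by rewrite coeffE /fmul big_allpairs_dep. Qed.

Lemma sumcat_l g u w :
  \sum_(s <- g) s.1 * (u ++ s.2 == w)%:R =
  (take (size u) w == u)%:R * coeff g (drop (size u) w).
Proof.
rewrite coeffE mulr_sumr; apply: eq_bigr => s _.
by rewrite catE natr_and [_ * (_ * _)]mulrCA (eq_sym (drop _ _)).
Qed.

Lemma sumcat_r g u w :
  \sum_(s <- g) s.1 * (s.2 ++ u == w)%:R =
  (drop (size w - size u)%N w == u)%:R * coeff g (take (size w - size u)%N w).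
Proof.
rewrite coeffE mulr_sumr; apply: eq_bigr => s _.
by rewrite catEr natr_and [_ * (_ * _)]mulrCA (eq_sym (take _ _)).
Qed.

Lemma coeff_mul_l f g w :
  coeff (fmul f g) w = \sum_(t <- f) t.1 * ((take (size t.2) w == t.2)%:R *
     coeff g (drop (size t.2) w)).
Proof.
rewrite coeff_mul; apply: eq_bigr => t _; rewrite -sumcat_l mulr_sumr.
by apply: eq_bigr => s _; rewrite mulrA.
Qed.

Lemma coeff_mul_r f g w :
  coeff (fmul g f) w = \sum_(t <- f) t.1 * ((drop (size w - size t.2) w == t.2)%:R *
     coeff g (take (size w - size t.2) w)).
Proof.
rewrite coeff_mul exchange_big; apply: eq_bigr => t _; rewrite -sumcat_r mulr_sumr.
by apply: eq_bigr => s _; rewrite mulrCA mulrA.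
Qed.

Lemma coeff_mulA f g h w :
  coeff (fmul (fmul f g) h) w = coeff (fmul f (fmul g h)) w.
Proof.
rewrite !coeff_mul /fmul big_allpairs_dep; apply: eq_bigr => t _.
rewrite big_allpairs_dep; apply: eq_bigr => s _; apply: eq_bigr => r _ /=.
by rewrite !mulrA catA.
Qed.

Definition gen (e : K * word * nat * word) : free K :=
  fscale e.1.1.1 (fmul (fword K e.1.1.2) (fmul (rel K e.1.2) (fword K e.2))).

Lemma coeff_gen e w : coeff (gen e) w =
  e.1.1.1 * \sum_(r <- rel K e.1.2) r.1 * (e.1.1.2 ++ (r.2 ++ e.2) == w)%:R.
Proof.
rewrite /gen coeff_scale coeff_mul big_seq1; congr (_ * _).
rewrite /fmul big_allpairs_dep; apply: eq_bigr => r _.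
by rewrite big_seq1 /= !mulr1 mul1r.
Qed.

Lemma coeff_idealgen s w : coeff (idealgen s) w = \sum_(e <- s) coeff (gen e) w.
Proof. by rewrite /idealgen coeff_flatten big_map. Qed.

Lemma I_coeff f g : (forall w, coeff f w = coeff g w) -> inIdeal g -> inIdeal f.
Proof. by move=> H [s Hs]; exists s => w; rewrite H. Qed.

Lemma I_nil : inIdeal ([::] : free K).
Proof. by exists [::] => w. Qed.

Lemma I_zero f : (forall w, coeff f w = 0) -> inIdeal f.
Proof. move=> H; apply: (I_coeff _ I_nil) => w; by rewrite H coeff_nil. Qed.

Lemma I_cat f g : inIdeal f -> inIdeal g -> inIdeal (f ++ g).
Proof.
move=> [s1 H1] [s2 H2]; exists (s1 ++ s2) => w.
by rewrite coeff_cat H1 H2 !coeff_idealgen big_cat.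
Qed.

Lemma I_scale k f : inIdeal f -> inIdeal (fscale k f).
Proof.
move=> [s H]; exists [seq ((k * e.1.1.1, e.1.1.2), e.1.2, e.2) | e <- s] => w.
rewrite coeff_scale H !coeff_idealgen big_map mulr_sumr; apply: eq_bigr => e _.
by rewrite !coeff_gen /= mulrA.
Qed.

Lemma I_monol k u g : inIdeal g -> inIdeal [seq (k * s.1, u ++ s.2) | s <- g].
Proof.
move=> [s H]; exists [seq ((k * e.1.1.1, u ++ e.1.1.2), e.1.2, e.2) | e <- s] => w.
rewrite coeffE big_map /=.
under eq_bigr do rewrite -mulrA.
rewrite -mulr_sumr sumcat_l H !coeff_idealgen big_map !mulr_sumr.
apply: eq_bigr => e _; rewrite !coeff_gen /= !mulr_sumr; apply: eq_bigr => r _.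
rewrite -!mulrA; congr (_ * _); rewrite mulrCA; congr (_ * _); rewrite mulrCA; congr (_ * _).
by rewrite (eq_sym _ (drop _ _)) -natr_and -catE catA.
Qed.

Lemma I_monor k u g : inIdeal g -> inIdeal [seq (s.1 * k, s.2 ++ u) | s <- g].
Proof.
move=> [s H]; exists [seq ((e.1.1.1 * k, e.1.1.2), e.1.2, e.2 ++ u) | e <- s] => w.
rewrite coeffE big_map /=.
under eq_bigr do rewrite [_ * k]mulrC -mulrA.
rewrite -mulr_sumr sumcat_r H !coeff_idealgen big_map !mulr_sumr.
apply: eq_bigr => e _; rewrite !coeff_gen /= !mulr_sumr; apply: eq_bigr => r _.
rewrite [e.1.1.1 * k]mulrC -!mulrA; congr (_ * _); rewrite mulrCA; congr (_ * _).
rewrite mulrCA; congr (_ * _); rewrite -natr_and andbC (eq_sym _ (take _ _)).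
by rewrite andbC -catEr -!catA.
Qed.

Lemma I_mull f g : inIdeal g -> inIdeal (fmul f g).
Proof.
move=> Hg; elim: f => [|t f IH]; first exact: I_nil.
rewrite /fmul allpairs_cons; apply: I_cat => //; exact: I_monol.
Qed.

Lemma I_mulr f g : inIdeal g -> inIdeal (fmul g f).
Proof.
move=> Hg; elim: f => [|t f IH].
  by apply: I_zero => w; rewrite coeff_mul_r big_nil.
apply: (I_coeff (g := [seq (s.1 * t.1, s.2 ++ t.2) | s <- g] ++ fmul g f)).
  move=> w; rewrite coeff_cat coeff_mul_r big_cons coeff_mul_r; congr (_ + _); apply: esym.
  rewrite coeffE big_map -sumcat_r mulr_sumr; apply: eq_bigr => s _ /=.
  by rewrite mulrCA mulrA.
by apply: I_cat => //; exact: I_monor.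
Qed.

Lemma eqL_coeff f g : (forall w, coeff f w = coeff g w) -> eqL f g.
Proof. by move=> H; apply: I_zero => w; rewrite coeff_cat coeff_neg H subrr. Qed.

Lemma eqL_refl f : eqL f f.
Proof. exact: eqL_coeff. Qed.

Lemma eqL_sym f g : eqL f g -> eqL g f.
Proof.
move=> H; apply: (I_coeff _ (I_scale (-1) H)) => w.
by rewrite coeff_scale !coeff_cat !coeff_neg mulN1r opprD opprK addrC.
Qed.

Lemma eqL_trans g f h : eqL f g -> eqL g h -> eqL f h.
Proof.
move=> H1 H2; apply: (I_coeff _ (I_cat H1 H2)) => w.
by rewrite !coeff_cat !coeff_neg addrA subrK.
Qed.

Lemma eqL_cat f f' g g' : eqL f f' -> eqL g g' -> eqL (f ++ g) (f' ++ g').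
Proof.
move=> H1 H2; apply: (I_coeff _ (I_cat H1 H2)) => w.
rewrite !coeff_cat !coeff_neg !coeff_cat opprD.
by rewrite addrACA.
Qed.

Lemma eqL_scale k f g : eqL f g -> eqL (fscale k f) (fscale k g).
Proof.
move=> H; apply: (I_coeff _ (I_scale k H)) => w.
by rewrite coeff_scale !coeff_cat !coeff_neg !coeff_scale mulrDr mulrN.
Qed.

Lemma eqL_mull f g g' : eqL g g' -> eqL (fmul f g) (fmul f g').
Proof.
move=> H; apply: (I_coeff _ (I_mull f H)) => w.
rewrite coeff_cat coeff_neg !coeff_mul_l -sumrN -big_split; apply: eq_bigr => t _ /=.
by rewrite coeff_cat coeff_neg mulrDr mulrDr !mulrN.
Qed.

Lemma eqL_mulr f g g' : eqL g g' -> eqL (fmul g f) (fmul g' f).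
Proof.
move=> H; apply: (I_coeff _ (I_mulr f H)) => w.
rewrite coeff_cat coeff_neg !coeff_mul_r -sumrN -big_split; apply: eq_bigr => t _ /=.
by rewrite coeff_cat coeff_neg mulrDr mulrDr !mulrN.
Qed.

Lemma eqL_mul f f' g g' : eqL f f' -> eqL g g' -> eqL (fmul f g) (fmul f' g').
Proof.
move=> H1 H2; apply: (eqL_trans (eqL_mull f H2)); exact: eqL_mulr.
Qed.

Lemma eqL_mulA f g h : eqL (fmul (fmul f g) h) (fmul f (fmul g h)).
Proof. apply: eqL_coeff => w; exact: coeff_mulA. Qed.

Lemma eqL_flatten (T : Type) (s : seq T) (F G : T -> free K) :
  (forall x, eqL (F x) (G x)) -> eqL (flatten (map F s)) (flatten (map G s)).
Proof.
move=> H; elim: s => [|x s IH] /=; first exact: eqL_refl.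
exact: eqL_cat.
Qed.

End Core.


Definition lt (c : bool) : letter := if c then Lb else La.
Definition path (u : seq bool) : word := map lt u.
Definition wt (u v : seq bool) : word := path u ++ wstar (path v).

Lemma wstar_cons c v : wstar (path (c :: v)) = wstar (path v) ++ [:: lstar (lt c)].
Proof. by rewrite /wstar /= rev_cons cats1. Qed.

Lemma wstar_cat (x y : word) : wstar (x ++ y) = wstar y ++ wstar x.
Proof. by rewrite /wstar map_cat rev_cat. Qed.

Lemma wstarK : involutive wstar.
Proof.
move=> x; rewrite /wstar map_rev revK -map_comp map_id_in //.
by move=> [] _.
Qed.

Lemma wstar_wt u v : wstar (wt u v) = wt v u.
Proof. by rewrite /wt wstar_cat wstarK. Qed.

Lemma lt_inj : injective lt. Proof. by case; case. Qed.
Lemma path_inj : injective path. Proof. exact: inj_map lt_inj. Qed.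
Lemma wstar_inj : injective wstar. Proof. exact: can_inj wstarK. Qed.

Lemma size_path u : size (path u) = size u. Proof. by rewrite size_map. Qed.

Lemma wt_inj u v u' v' : size u = size u' -> wt u v = wt u' v' -> u = u' /\ v = v'.
Proof.
move=> Hs /eqP; rewrite /wt eqseq_cat ?size_path // => /andP[/eqP H1 /eqP H2].
by split; [exact: path_inj | exact: path_inj (wstar_inj H2)].
Qed.

Lemma wdeg_cat x y : wdeg (x ++ y) = wdeg x + wdeg y.
Proof. by rewrite /wdeg big_cat. Qed.

Lemma wdeg_path u : wdeg (path u) = (size u)%:Z.
Proof.
elim: u => [|c u IH]; first by rewrite /wdeg big_nil.
rewrite /wdeg /= big_cons -/(wdeg _) IH; case: c => /=; lia.
Qed.

Lemma wdeg_wstar_path u : wdeg (wstar (path u)) = - (size u)%:Z.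
Proof.
elim: u => [|c u IH]; first by rewrite /wdeg /wstar big_nil.
rewrite wstar_cons wdeg_cat IH /wdeg big_cons big_nil; case: c => /=; lia.
Qed.

Lemma wdeg_wt u v : wdeg (wt u v) = (size u)%:Z - (size v)%:Z.
Proof. by rewrite /wt wdeg_cat wdeg_path wdeg_wstar_path. Qed.

Section NF.
Variable K : fieldType.
Local Notation eqL := (@eqL K).

Lemma I_gen (e : K * word * nat * word) : inIdeal (gen e).
Proof.
exists [:: e] => w; by rewrite coeff_idealgen big_seq1.
Qed.

Lemma eqL_gen (f g : free K) e :
  (forall w, coeff (f ++ fneg g) w = coeff (gen e) w) -> eqL f g.
Proof. move=> H; exact: I_coeff H (I_gen e). Qed.

Lemma eqL_term (k k' : K) (x y : word) : k = k' -> x = y -> eqL [:: (k, x)] [:: (k', y)].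
Proof. by move=> -> ->; exact: eqL_refl. Qed.

Lemma R0 (c c' : bool) (k : K) w1 w2 :
  eqL [:: (k, w1 ++ [:: lstar (lt c); lt c'] ++ w2)]
      (if c == c' then [:: (k, w1 ++ w2)] else [::]).
Proof.
case: c; case: c' => /=.
- apply: (eqL_gen (e := ((k, w1), 1%N, w2))) => w.
  rewrite coeff_gen /= /fadd /fneg /fscale /fword /fone /= !big_cons big_nil.
  rewrite !coeff_cons coeff_nil /=. 
  rewrite !mulr1 mul1r !addr0; ring.
- apply: (eqL_gen (e := ((k, w1), 3%N, w2))) => w.
  rewrite coeff_gen /= /fword /= !big_cons big_nil.
  by rewrite !coeff_cons coeff_nil /= mul1r !addr0.
- apply: (eqL_gen (e := ((k, w1), 2%N, w2))) => w.
  rewrite coeff_gen /= /fword /= !big_cons big_nil.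
  by rewrite !coeff_cons coeff_nil /= mul1r !addr0.
- apply: (eqL_gen (e := ((k, w1), 0%N, w2))) => w.
  rewrite coeff_gen /= /fadd /fneg /fscale /fword /fone /= !big_cons big_nil.
  rewrite !coeff_cons coeff_nil /=.
  rewrite !mulr1 mul1r !addr0; ring.
Qed.

Lemma R4 (k : K) w1 w2 :
  eqL [:: (k, w1 ++ [:: La; Las] ++ w2); (k, w1 ++ [:: Lb; Lbs] ++ w2)]
      [:: (k, w1 ++ w2)].
Proof.
apply: (eqL_gen (e := ((k, w1), 4%N, w2))) => w.
rewrite coeff_gen /= /fadd /fneg /fscale /fword /fone /= !big_cons big_nil.
rewrite !coeff_cons coeff_nil /=.
rewrite !mulr1 mul1r !addr0; ring.
Qed.


Lemma letter_cases x : exists c, x = lt c \/ x = lstar (lt c).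
Proof. by case: x; [exists false; left|exists true; left|exists false; right|exists true; right]. Qed.

Definition nfl (L : seq (K * seq bool * seq bool)) : free K :=
  [seq (t.1.1, wt t.1.2 t.2) | t <- L].

Lemma nf_step k u v x : exists L' : seq (seq bool * seq bool),
  all (fun p => (size p.1)%:Z - (size p.2)%:Z == (size u)%:Z - (size v)%:Z + ldeg x) L' /\
  eqL [:: (k, wt u v ++ [:: x])] [seq (k, wt p.1 p.2) | p <- L'].
Proof.
have [c [->|->]] := letter_cases x.
- case: v => [|c' v].
  + exists [:: (rcons u c, [::])]; split.
      by rewrite /= andbT size_rcons; case: c => /=; apply/eqP; lia.
    apply: eqL_term => //.
    by rewrite /wt /path /wstar /= !cats0 map_rcons cats1.
  + exists (if c' == c then [:: (u, v)] else [::]); split.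
      by case: (c' == c) => //=; rewrite andbT; case: c => /=; apply/eqP; lia.
    have -> : wt u (c' :: v) ++ [:: lt c] =
       (path u ++ wstar (path v)) ++ [:: lstar (lt c'); lt c] ++ [::].
      by rewrite /wt wstar_cons -!catA.
    apply: eqL_trans (R0 _ _ _ _ _) _.
    by case: (c' == c) => /=; [rewrite cats0; exact: eqL_refl | exact: eqL_refl].
- exists [:: (u, c :: v)]; split.
    by rewrite /= andbT; case: c => /=; apply/eqP; lia.
  by apply: eqL_term => //; rewrite /wt wstar_cons catA.
Qed.

Lemma wdeg_rcons w x : wdeg (rcons w x) = wdeg w + ldeg x.
Proof. by rewrite -cats1 wdeg_cat /wdeg big_seq1. Qed.

Lemma nf_word k w : exists L : seq (seq bool * seq bool),
  all (fun p => (size p.1)%:Z - (size p.2)%:Z == wdeg w) L /\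
  eqL [:: (k, w)] [seq (k, wt p.1 p.2) | p <- L].
Proof.
elim/last_ind: w => [|w0 x [L [HL HE]]].
  by exists [:: ([::], [::])]; split; [rewrite /= /wdeg big_nil | exact: eqL_refl].
have E1 : eqL [:: (k, rcons w0 x)] (fmul [:: (k, w0)] (fword K [:: x])).
  by apply: eqL_term; rewrite ?mulr1 ?cats1.
have E2 := eqL_mulr (fword K [:: x]) HE.
have Heq : fmul [seq (k, wt p.1 p.2) | p <- L] (fword K [:: x]) =
          [seq (k * 1, wt p.1 p.2 ++ [:: x]) | p <- L].
  by clear; elim: L => //= p L IH; rewrite /fmul allpairs_cons /=; congr (_ :: _); exact: IH.

rewrite Heq in E2; clear Heq.
suff [L' [H1 H2]] : exists L' : seq (seq bool * seq bool),
  all (fun p => (size p.1)%:Z - (size p.2)%:Z == wdeg (rcons w0 x)) L' /\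
  eqL [seq (k * 1, wt p.1 p.2 ++ [:: x]) | p <- L] [seq (k, wt p.1 p.2) | p <- L'].
  by exists L'; split => //; apply: eqL_trans E1 (eqL_trans E2 H2).
elim: L HL {HE E2} => [|[u v] L IH] /=; first by exists [::]; split => //; exact: eqL_refl.
case/andP => /eqP Huv /IH [L1 [H1 H2]].
have [L0 [H3 H4]] := nf_step k u v x.
exists (L0 ++ L1); split.
  rewrite all_cat H1 andbT; apply/allP => p /(allP H3) /eqP ->.
  by rewrite wdeg_rcons Huv.
rewrite map_cat; apply: (eqL_cat (f := [:: (k * 1, wt u v ++ [:: x])])) => //.
by rewrite mulr1.
Qed.

Lemma nf_list (g : free K) n : all (fun t => wdeg t.2 == n) g ->
  exists L, all (fun t => (size t.1.2)%:Z - (size t.2)%:Z == n) L /\ eqL g (nfl L).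
Proof.
elim: g => [|[k w] g IH] /=; first by exists [::]; split => //; exact: eqL_refl.
case/andP => /eqP Hw /IH [L1 [H1 H2]].
have [L0 [H3 H4]] := nf_word k w.
exists ([seq (k, p.1, p.2) | p <- L0] ++ L1); split.
  rewrite all_cat H1 andbT all_map; apply/allP => p /(allP H3) /=.
  by rewrite Hw.
rewrite /nfl map_cat -map_comp.
by apply: (eqL_cat (f := [:: (k, w)])).
Qed.

Fixpoint allw (m : nat) : seq (seq bool) :=
  if m is m'.+1 then [seq false :: w | w <- allw m'] ++ [seq true :: w | w <- allw m']
  else [:: [::]].

Lemma mem_map_cons (b c : bool) w (s : seq (seq bool)) :
  (c :: w \in [seq b :: x | x <- s]) = (c == b) && (w \in s).
Proof.
apply/mapP/andP => [[y Hy [-> ->]]|[/eqP -> Hw]]; first by rewrite eqxx.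
by exists w.
Qed.

Lemma mem_allw m w : (w \in allw m) = (size w == m).
Proof.
elim: m w => [|m IH] [|c w] //=.
- by rewrite mem_cat; apply/negP => /orP[] /mapP [].
- by rewrite mem_cat !mem_map_cons IH; case: c; rewrite /= ?orbF.
Qed.

Lemma uniq_allw m : uniq (allw m).
Proof.
elim: m => [|m IH] //=; rewrite cat_uniq !map_inj_uniq ?IH //=; try by move=> x y [].
by rewrite andbT; apply/hasPn => x /mapP [y _ ->]; rewrite mem_map_cons.
Qed.

Lemma pad k u v m : eqL (nfl [:: (k, u, v)]) (nfl [seq (k, u ++ w, v ++ w) | w <- allw m]).
Proof.
elim: m u v => [|m IH] u v /=; first by rewrite !cats0; exact: eqL_refl.
have step : forall c, wt (u ++ [:: c]) (v ++ [:: c]) =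
    path u ++ [:: lt c; lstar (lt c)] ++ wstar (path v).
  by move=> c; rewrite /wt /path !map_cat wstar_cat -catA.
apply: eqL_trans (eqL_sym (R4 k (path u) (wstar (path v)))) _.
rewrite -(step false) -(step true) /nfl /= !map_cat -!map_comp.
apply: (eqL_cat (f := [:: (k, wt (u ++ [:: false]) (v ++ [:: false]))])).
  apply: eqL_trans (IH _ _) _; rewrite /nfl -!map_comp; apply: eqL_coeff => w'.
  by congr (coeff _ _); apply: eq_map => x /=; rewrite -!catA.
apply: eqL_trans (IH _ _) _; rewrite /nfl -!map_comp; apply: eqL_coeff => w'.
by congr (coeff _ _); apply: eq_map => x /=; rewrite -!catA.
Qed.

Definition N R := size (allw R).
Definition wd R (i : 'I_(N R)) : seq bool := nth [::] (allw R) i.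
Arguments wd : clear implicits.

Lemma size_wd R i : size (wd R i) = R.
Proof. by apply/eqP; rewrite -mem_allw mem_nth. Qed.

Lemma wd_inj R : injective (wd R).
Proof.
move=> i j /eqP; rewrite /wd nth_uniq ?uniq_allw //.
by move/eqP/val_inj.
Qed.

Lemma wd_surj R u : size u = R -> exists i, wd R i = u.
Proof.
move=> Hu; have Hi : (index u (allw R) < N R)%N by rewrite index_mem mem_allw Hu.
by exists (Ordinal Hi); rewrite /wd nth_index // mem_allw Hu.
Qed.

Definition prs R C := [seq (i, j) | i <- enum 'I_(N R), j <- enum 'I_(N C)].
Definition mxe R C (X : 'M[K]_(N R, N C)) : free K :=
  [seq (X p.1 p.2, wt (wd R p.1) (wd C p.2)) | p <- prs R C].
Arguments mxe : clear implicits.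

Lemma sum_enum n (F : 'I_n -> K) : \sum_(i <- enum 'I_n) F i = \sum_i F i.
Proof. by rewrite big_enum; apply: eq_big. Qed.

Lemma coeff_mxe R C X w : coeff (mxe R C X) w =
  \sum_i \sum_j X i j * (wt (wd R i) (wd C j) == w)%:R.
Proof.
rewrite coeffE big_map big_allpairs sum_enum; apply: eq_bigr => i _.
by rewrite sum_enum.
Qed.

Lemma mxe_add R C X Y : eqL (mxe R C X ++ mxe R C Y) (mxe R C (X + Y)).
Proof.
apply: eqL_coeff => w; rewrite coeff_cat !coeff_mxe -big_split; apply: eq_bigr => i _.
rewrite -big_split; apply: eq_bigr => j _; by rewrite mxE mulrDl.
Qed.

Lemma mxe0 R C : eqL [::] (mxe R C 0).
Proof.
apply: eqL_coeff => w; rewrite coeff_nil coeff_mxe big1 // => i _.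
by rewrite big1 // => j _; rewrite mxE mul0r.
Qed.

Lemma sum_delta n (i : 'I_n) (G : 'I_n -> K) : \sum_i' (i' == i)%:R * G i' = G i.
Proof.
rewrite (bigD1 i) //= eqxx mul1r big1 ?addr0 // => i' /negbTE ->.
by rewrite mul0r.
Qed.

Lemma mxe_term R C k u v : size u = R -> size v = C ->
  exists X, eqL [:: (k, wt u v)] (mxe R C X).
Proof.
move=> Hu Hv; have [i Hi] := wd_surj Hu; have [j Hj] := wd_surj Hv.
exists (k *: delta_mx i j); apply: eqL_coeff => w.
rewrite coeff_cons coeff_nil addr0 coeff_mxe /=.
have sw : forall a b c d : K, a * (b * c) * d = b * (c * (a * d)).
  by move=> a b c d; rewrite -mulrA mulrCA mulrA (mulrC b) -!mulrA mulrCA.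
under eq_bigr do under eq_bigr do rewrite !mxE natr_and sw.
under eq_bigr do rewrite -mulr_sumr sum_delta.
by rewrite sum_delta Hi Hj.
Qed.

Lemma mxe_nf R C (L : seq (K * seq bool * seq bool)) :
  all (fun t => (size t.1.2 == R) && (size t.2 == C)) L ->
  exists X, eqL (nfl L) (mxe R C X).
Proof.
elim: L => [|[[k u] v] L IH] /=; first by exists 0; exact: mxe0.
case/andP => /andP [/eqP Hu /eqP Hv] /IH [X HX].
have [Y HY] := mxe_term k Hu Hv.
exists (Y + X); apply: eqL_trans (mxe_add _ _).
exact: (eqL_cat (f := [:: (k, wt u v)])).
Qed.

Lemma cancel_wp v v' k w1 w2 : size v = size v' ->
  eqL [:: (k, w1 ++ wstar (path v) ++ path v' ++ w2)]
      (if v == v' then [:: (k, w1 ++ w2)] else [::]).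
Proof.
elim: v v' w1 w2 => [|c v IH] [|c' v0] w1 w2 //= Hs.
  exact: eqL_refl.
case: Hs => Hs.
have -> : w1 ++ wstar (path (c :: v)) ++ path (c' :: v0) ++ w2 =
   (w1 ++ wstar (path v)) ++ [:: lstar (lt c); lt c'] ++ (path v0 ++ w2).
  by rewrite wstar_cons /= -!catA.
apply: eqL_trans (R0 _ _ _ _ _) _.
rewrite eqseq_cons; case: (c == c') => /=; last exact: eqL_refl.
by rewrite -catA; apply: IH.
Qed.

Lemma fmul_map (T1 T2 : Type) (P : seq T1) (Q : seq T2) (F : T1 -> K * word)
  (G : T2 -> K * word) (H : T1 -> T2 -> free K) :
  (forall p q, eqL [:: ((F p).1 * (G q).1, (F p).2 ++ (G q).2)] (H p q)) ->
  eqL (fmul (map F P) (map G Q)) (flatten [seq flatten [seq H p q | q <- Q] | p <- P]).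
Proof.
move=> HH; elim: P => [|p P IH] /=; first exact: eqL_refl.
rewrite /fmul allpairs_cons; apply: eqL_cat => //.
elim: Q {IH} => [|q Q IHQ] /=; first exact: eqL_refl.
exact: (eqL_cat (f := [:: _])).
Qed.

Lemma mxe_mul R1 C R2 (X : 'M[K]_(N R1, N C)) (Y : 'M[K]_(N C, N R2)) :
  eqL (fmul (mxe R1 C X) (mxe C R2 Y)) (mxe R1 R2 (X *m Y)).
Proof.
set H := fun (p : 'I_(N R1) * 'I_(N C)) (q : 'I_(N C) * 'I_(N R2)) =>
  if p.2 == q.1 then [:: (X p.1 p.2 * Y q.1 q.2, wt (wd R1 p.1) (wd R2 q.2))] else [::].
apply: eqL_trans (@fmul_map _ _ _ _ _ _ H _) _.
  move=> p q /=; rewrite /H.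
  have -> : wt (wd R1 p.1) (wd C p.2) ++ wt (wd C q.1) (wd R2 q.2) =
     path (wd R1 p.1) ++ wstar (path (wd C p.2)) ++ path (wd C q.1) ++ wstar (path (wd R2 q.2)).
    by rewrite /wt -!catA.
  rewrite -(inj_eq (@wd_inj C)).
  by apply: cancel_wp; rewrite !size_wd.
apply: eqL_coeff => w.
rewrite coeff_flatten big_map coeff_mxe /prs big_allpairs sum_enum; apply: eq_bigr => i _.
rewrite sum_enum.
under eq_bigr do rewrite coeff_flatten big_map big_allpairs sum_enum.
have E : forall j j' k, coeff (H (i, j) (j', k)) w =
   (j' == j)%:R * (X i j * Y j' k * (wt (wd R1 i) (wd R2 k) == w)%:R).
  move=> j j' k; rewrite /H /= eq_sym; case: eqP => _.
    by rewrite coeff_cons coeff_nil addr0 mul1r.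
  by rewrite coeff_nil mul0r.
under eq_bigr do under eq_bigr do rewrite sum_enum.
under eq_bigr do under eq_bigr do under eq_bigr do rewrite E.
under eq_bigr do under eq_bigr do rewrite -mulr_sumr.
under eq_bigr do rewrite sum_delta.
rewrite exchange_big; apply: eq_bigr => k _.
by rewrite mxE mulr_suml.
Qed.

Lemma mxe_star (conj : {rmorphism K -> K}) R C (X : 'M[K]_(N R, N C)) :
  eqL (fstar conj (mxe R C X)) (mxe C R (map_mx conj X^T)).
Proof.
apply: eqL_coeff => w.
rewrite coeff_mxe coeffE /fstar /mxe -map_comp big_map /prs big_allpairs sum_enum.
under eq_bigr do rewrite sum_enum.
rewrite exchange_big /=; apply: eq_bigr => j _; apply: eq_bigr => i _.
by rewrite /= wstar_wt !mxE.
Qed.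

Lemma homog_mxe R (P : 'M[K]_(N R, N R)) : homog (mxe R R P).
Proof.
exists 0, (mxe R R P); split; first exact: eqL_refl.
apply/allP => t /mapP [p _ ->] /=.
by rewrite wdeg_wt !size_wd subrr.
Qed.

End NF.


Section Ev.
Variable K : fieldType.

Definition act (l : letter) (g : nat -> K) : nat -> K :=
  match l with
  | La => fun m => if odd m then 0 else g m./2
  | Lb => fun m => if odd m then g m./2 else 0
  | Las => fun n => g n.*2
  | Lbs => fun n => g n.*2.+1
  end.

Definition wact (w : word) (g : nat -> K) : nat -> K := foldr act g w.

Definition ev (f : free K) (g : nat -> K) : nat -> K :=
  fun n => \sum_(t <- f) t.1 * wact t.2 g n.

Lemma act_lin (I : Type) (s : seq I) (a : I -> K) (G : I -> nat -> K) l :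
  act l (fun m => \sum_(i <- s) a i * G i m) = fun m => \sum_(i <- s) a i * act l (G i) m.
Proof.
apply: functional_extensionality => m; case: l => //=; case: (odd m) => //;
  by rewrite big1 // => i _; rewrite mulr0.
Qed.

Lemma wact_lin (I : Type) (s : seq I) (a : I -> K) (G : I -> nat -> K) w :
  wact w (fun m => \sum_(i <- s) a i * G i m) = fun m => \sum_(i <- s) a i * wact w (G i) m.
Proof. by elim: w => [|l w IH] //=; rewrite /wact /= -/(wact w _) IH act_lin. Qed.

Lemma wact_cat u v g : wact (u ++ v) g = wact u (wact v g).
Proof. by rewrite /wact foldr_cat. Qed.

Lemma ev_mul f h g n : ev (fmul f h) g n = ev f (ev h g) n.
Proof.
rewrite /ev /fmul big_allpairs_dep; apply: eq_bigr => t _.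
rewrite wact_lin mulr_sumr; apply: eq_bigr => s _ /=.
by rewrite wact_cat mulrA.
Qed.

Lemma ev_cat f h g n : ev (f ++ h) g n = ev f g n + ev h g n.
Proof. by rewrite /ev big_cat. Qed.

Lemma ev_scale k f g n : ev (fscale k f) g n = k * ev f g n.
Proof.
rewrite /ev /fscale big_map mulr_sumr; apply: eq_bigr => t _; by rewrite mulrA.
Qed.

Lemma ev_coeffW f (W : seq word) g n : uniq W -> {subset map snd f <= W} ->
  ev f g n = \sum_(w <- W) coeff f w * wact w g n.
Proof.
move=> uW sW.
under [RHS]eq_bigr do rewrite coeffE mulr_suml.
rewrite exchange_big; apply: eq_big_seq => t Ht.
have tW : t.2 \in W by apply: sW; apply/mapP; exists t.
rewrite (big_rem _ tW) /= eqxx mulr1 big1_seq ?addr0 // => w.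
move=> /andP [_]; rewrite mem_rem_uniq // => /andP [Hw _]; rewrite /= eq_sym in Hw.
by rewrite (negbTE Hw) mulr0 mul0r.
Qed.

Lemma ev_coeff f f' g n : (forall w, coeff f w = coeff f' w) -> ev f g n = ev f' g n.
Proof.
move=> H; set W := undup (map snd (f ++ f')).
have uW : uniq W by apply: undup_uniq.
rewrite (@ev_coeffW f W) // ?(@ev_coeffW f' W) //.
- by apply: eq_bigr => w _; rewrite H.
- by move=> w Hw; rewrite mem_undup map_cat mem_cat Hw orbT.
- by move=> w Hw; rewrite mem_undup map_cat mem_cat Hw.
Qed.

Lemma wact0 w : wact w (fun _ => 0) = fun _ => 0.
Proof.
elim: w => [|l w IH] //=; rewrite /wact /= -/(wact w _) IH.
by apply: functional_extensionality => m; case: l => //=; case: odd.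
Qed.

Lemma halfD n : (n.*2)./2 = n.
Proof. by have := half_bit_double n false; rewrite add0n. Qed.
Lemma halfS n : (n.*2.+1)./2 = n.
Proof. by have := half_bit_double n true; rewrite add1n. Qed.

Lemma ev_rel i g n : ev (rel K i) g n = 0.
Proof.
rewrite /ev; case: i => [|[|[|[|i]]]];
  rewrite /rel /fadd /fneg /fscale /fword /fone /= !big_cons big_nil /=.
- by rewrite odd_double halfD !mulr1 !mul1r addr0 mulN1r subrr.
- by rewrite /= odd_double uphalf_double !mulr1 !mul1r addr0 mulN1r subrr.
- by rewrite odd_double mulr0 addr0.
- by rewrite /= odd_double mulr0 addr0.
- rewrite !mul1r !mulr1 addr0 mulN1r.
  case Ho : (odd n).
    by rewrite add0r -{2}(odd_double_half n) Ho add1n subrr.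
  by rewrite add0r -{2}(odd_double_half n) Ho add0n subrr.
Qed.

Lemma ev_gen e g n : ev (gen e) g n = 0.
Proof.
rewrite /gen ev_scale ev_mul.
have -> : ev (fmul (rel K e.1.2) (fword K e.2)) g = fun _ => 0.
  by apply: functional_extensionality => m; rewrite ev_mul ev_rel.
by rewrite /ev /fword big_seq1 wact0 mulr0 mulr0.
Qed.

Lemma ev_idealgen s g n : ev (idealgen s) g n = 0.
Proof.
rewrite /idealgen; elim: s => [|e s IH] /=; first by rewrite /ev big_nil.
by rewrite ev_cat IH ev_gen addr0.
Qed.

Lemma ev_eqL f f' g n : eqL f f' -> ev f g n = ev f' g n.
Proof.
move=> [s Hs].
have := ev_coeff g n Hs; rewrite ev_idealgen ev_cat ev_scale mulN1r.
by move/eqP; rewrite subr_eq0 => /eqP.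
Qed.

Lemma ev_one g n : ev (fone K) g n = g n.
Proof. by rewrite /ev /fone big_seq1 mul1r. Qed.

Definition g0 : nat -> K := fun m => (m == 1)%N%:R.

Lemma ev_aas : ev (fword K [:: La]) (ev (fword K [:: Las]) g0) 1 = 0.
Proof. by rewrite /ev /fword !big_seq1 /= mulr0. Qed.

Lemma homog_word w : homog (fword K w).
Proof.
exists (wdeg w), (fword K w); split; first exact: eqL_refl.
by rewrite /= eqxx.
Qed.

Lemma not_df : ~ graded_directly_finite K.
Proof.
move=> DF.
have H : eqL (fmul (fword K [:: Las]) (fword K [:: La])) (fone K).
  apply: eqL_trans (R0 false false 1 [::] [::]).
  by rewrite /fmul /fword /=; apply: eqL_term; rewrite ?mulr1.
have := DF _ _ (homog_word _) (homog_word _) H.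
move/(ev_eqL g0 1); rewrite ev_mul ev_aas ev_one /g0 eqxx => /eqP.
by rewrite eq_sym oner_eq0.
Qed.

Lemma not_ur : ~ graded_unit_regular K.
Proof.
move=> UR.
have [y [_ [[z [Hyz Hzy]] Hxyx]]] := UR _ (homog_word [:: La]).
set A := ev (fword K [:: La]); set As := ev (fword K [:: Las]).
set Y := ev y; set Z := ev z.
have fe : forall f f', eqL f f' -> forall g, ev f g = ev f' g.
  by move=> f f' H g; apply: functional_extensionality => n; apply: ev_eqL.
have h1 : forall g, Z (Y g) = g.
  move=> g; apply: functional_extensionality => n.
  by rewrite /Z /Y -ev_mul (ev_eqL _ _ Hzy) ev_one.
have h3 : forall g, A (Y (A g)) = A g.
  move=> g; apply: functional_extensionality => n.
  by rewrite /A /Y -!ev_mul (ev_eqL _ _ Hxyx).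
have h4 : forall g, As (A g) = g.
  move=> g; apply: functional_extensionality => n.
  rewrite /As /A /ev /fword !big_seq1 /= big_seq1 /= odd_double halfD.
  by rewrite !mul1r.
have YA : forall g, Y (A g) = g by move=> g; rewrite -{1}(h4 (Y (A g))) h3 h4.
have ZA : forall g, Z g = A g by move=> g; rewrite -{1}(YA g) h1.
have AY : forall g, A (Y g) = g by move=> g; rewrite -ZA h1.
have AsY : forall g, As g = Y g by move=> g; rewrite -{1}(AY g) h4.
have := ev_aas; rewrite -/A -/As AsY AY /g0 eqxx => /eqP.
by rewrite oner_eq0.
Qed.

End Ev.


Arguments mxe {K} R C X.
Section Fin.
Variable K : fieldType.

Lemma pad_list (L : seq (K * seq bool * seq bool)) (m : K * seq bool * seq bool -> nat) :
  eqL (nfl L) (nfl (flatten [seq [seq (t.1.1, t.1.2 ++ w, t.2 ++ w) | w <- allw (m t)] | t <- L])).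
Proof.
elim: L => [|[[k u] v] L IH] /=; first exact: eqL_refl.
rewrite /nfl map_cat; apply: (eqL_cat (f := [:: (k, wt u v)])) => //.
exact: (pad k u v (m (k, u, v))).
Qed.

Lemma normal_mxe (x : free K) : homog x ->
  exists R C (X : 'M[K]_(N R, N C)), eqL x (mxe R C X).
Proof.
move=> [n [g [Hxg Hall]]].
have [L [HL HgL]] := nf_list Hall.
set C := (\max_(t <- L) size t.2 + `|n|)%N.
set R := absz (C%:Z + n).
set m := fun t : K * seq bool * seq bool => (C - size t.2)%N.
have HP := pad_list L m.
have [X HX] : exists X, eqL (nfl (flatten [seq [seq (t.1.1, t.1.2 ++ w, t.2 ++ w)
                   | w <- allw (m t)] | t <- L])) (mxe R C X).
  apply: mxe_nf; apply/allP => t' /flattenP [s /mapP [t Ht ->]] /mapP [w Hw ->] /=.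
  move: Hw; rewrite mem_allw => /eqP Hw.
  have Hle : (size t.2 <= \max_(t <- L) size t.2)%N by apply: leq_bigmax_seq.
  move: (allP HL t Ht) => /eqP Hd.
  rewrite !size_cat Hw /m /R /C; move: Hle Hd; generalize (\max_(t <- L) size t.2) => M Hle Hd.
  have Hd2 : (size t.1.2)%:Z = (size t.2)%:Z + n by rewrite -Hd addrC subrK.
  clear -Hle Hd2; set a := size t.2 in Hle Hd2 *; set b := size t.1.2 in Hd2 *.
  clearbody a b; apply/andP; split; apply/eqP; lia.
exists R, C, X.
exact: eqL_trans Hxg (eqL_trans HgL (eqL_trans HP HX)).
Qed.

Lemma star_regular (conj : {rmorphism K -> K}) :
  involutive conj -> positive_definite conj -> graded_star_regular conj.
Proof.
move=> ci pd x Hx.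
have [R [C [X HX]]] := normal_mxe Hx.
have [P [Z [PP [stP [PXZ XPX]]]]] := proj_exists ci pd X.
exists (mxe R R P); split; first exact: homog_mxe.
split.
  split.
    by have := mxe_mul P P; rewrite PP.
  by have := mxe_star conj P; rewrite /st in stP; rewrite stP.
split.
  move=> y; exists (fmul (mxe R C X) y).
  have E := eqL_sym (mxe_mul P X); rewrite -XPX in E.
  apply: eqL_trans (eqL_mulr y HX) _.
  apply: eqL_trans (eqL_mulr y E) _.
  exact: eqL_mulA.
move=> y; exists (fmul (mxe C R Z) y).
have E := eqL_sym (mxe_mul X Z); rewrite -PXZ in E.
apply: eqL_trans (eqL_mulr y E) _.
apply: eqL_trans (eqL_mulA _ _ _) _.
exact: eqL_mulr (eqL_sym HX).
Qed.
End Fin.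

Theorem mainTheorem16 (K : fieldType) (conj : {rmorphism K -> K})
  (conj_invol : involutive conj)
  (Kpd : positive_definite conj) :
  graded_star_regular conj /\ ~ graded_unit_regular K /\ ~ graded_directly_finite K.
Proof.
split; first exact: star_regular.
split; [exact: not_ur | exact: not_df].
Qed.
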